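(* For every positive integer $n$, the Chinese monoid $\mathsf{Ch}_n$ has a faithful (i.e. injective) tropical linear representation $\rho:\mathsf{Ch}_n\to\mathcal U_{n(n+1)}(\mathbb T)$ by upper triangular tropical matrices; more precisely, the image consists of block-diagonal triangular matrices whose diagonal blocks are $2\times 2$ upper triangular tropical matrices.
   Context: The Chinese monoid of rank $n$ is the monoid $\mathsf{Ch}_n=\langle a_1,\dots,a_n\rangle$ presented by the relations $a_ja_ka_i=a_ka_ja_i=a_ka_ia_j$ for all $1\le i\le j\le k\le n$. The tropical (max-plus) semiring is $\mathbb T=\mathbb R\cup\{-\infty\}$ with addition $a\vee b=\max\{a,b\}$ and multiplication $a+b$ (ordinary sum). $\mathcal M_N(\mathbb T)$ denotes the monoid of $N\times N$ matrices over $\mathbb T$ with the induced matrix product $(AB)_{ij}=\max_k (A_{ik}+B_{kj})$, and $\mathcal U_N(\mathbb T)$ the submonoid of upper triangular matrices (entries below the diagonal equal to $-\infty$). A tropical linear representation of a monoid $\mathcal S$ is a monoid homomorphism $\rho:\mathcal S\to\mathcal M_N(\mathbb T)$, i.e. $\rho(xy)=\rho(x)\rho(y)$ for all $x,y$; it is faithful if injective. *)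

(* Defs.v *)
From Stdlib Require Import Reals.
From mathcomp Require Import all_boot all_algebra.
Set Implicit Arguments. Unset Strict Implicit. Unset Printing Implicit Defensive.

(* None stands for -oo, Some x for the real x. *)
Definition trop := option R.

Definition tadd (a b : trop) : trop :=
  match a, b with
  | None, _ => b
  | _, None => a
  | Some x, Some y => Some (Rmax x y)
  end.

Definition tmul (a b : trop) : trop :=
  match a, b with
  | Some x, Some y => Some (Rplus x y)
  | _, _ => None
  end.

Definition tmxmul (N : nat) (A B : 'M[trop]_N) : 'M[trop]_N :=
  \matrix_(i < N, j < N) \big[tadd/None]_(k < N) tmul (A i k) (B k j).

Definition tmx1 (N : nat) : 'M[trop]_N :=
  \matrix_(i < N, j < N) if i == j then Some R0 else None.

Definition upper_tri (N : nat) (A : 'M[trop]_N) : Prop :=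
  forall i j : 'I_N, (j < i)%N -> A i j = None.

Definition block_diag2 (N : nat) (A : 'M[trop]_N) : Prop :=
  forall i j : 'I_N, (i./2 != j./2)%N -> A i j = None.

(* Elements of Ch_n are words over the generators a_1..a_n (here 'I_n)
   modulo the congruence generated by
   a_j a_k a_i = a_k a_j a_i = a_k a_i a_j  for i <= j <= k. *)
Inductive chinese_cong (n : nat) : seq 'I_n -> seq 'I_n -> Prop :=
| chc_rel1 (i j k : 'I_n) (u v : seq 'I_n) :
    (i <= j)%N -> (j <= k)%N ->
    chinese_cong (u ++ [:: j; k; i] ++ v) (u ++ [:: k; j; i] ++ v)
| chc_rel2 (i j k : 'I_n) (u v : seq 'I_n) :
    (i <= j)%N -> (j <= k)%N ->
    chinese_cong (u ++ [:: k; j; i] ++ v) (u ++ [:: k; i; j] ++ v)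
| chc_refl (u : seq 'I_n) : chinese_cong u u
| chc_sym (u v : seq 'I_n) : chinese_cong u v -> chinese_cong v u
| chc_trans (u v w : seq 'I_n) :
    chinese_cong u v -> chinese_cong v w -> chinese_cong u w.

(* A tropical linear representation of Ch_n of dimension N, given on words:
   a monoid homomorphism from the free monoid that is constant on
   congruence classes (so it factors through Ch_n). *)
Definition chinese_trop_rep (n N : nat) (rho : seq 'I_n -> 'M[trop]_N) : Prop :=
  [/\ rho [::] = tmx1 N,
      (forall u v, rho (u ++ v) = tmxmul (rho u) (rho v)) &
      (forall u v, chinese_cong u v -> rho u = rho v)].

(* faithful: the induced map Ch_n -> M_N(T) is injective *)
Definition chinese_faithful (n N : nat) (rho : seq 'I_n -> 'M[trop]_N) : Prop :=
  forall u v, rho u = rho v -> chinese_cong u v.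

(* Main.v *)
Require Import Defs.
From Stdlib Require Import Reals Lra Lia.
From mathcomp Require Import all_boot all_algebra.
From mathcomp Require Import zify.
From HB Require Import structures.
Set Implicit Arguments. Unset Strict Implicit. Unset Printing Implicit Defensive.

Inductive ch : seq nat -> seq nat -> Prop :=
| ch1 (i j k : nat) (u v : seq nat) : i <= j -> j <= k ->
    ch (u ++ [:: j; k; i] ++ v) (u ++ [:: k; j; i] ++ v)
| ch2 (i j k : nat) (u v : seq nat) : i <= j -> j <= k ->
    ch (u ++ [:: k; j; i] ++ v) (u ++ [:: k; i; j] ++ v)
| chR u : ch u u
| chS u v : ch u v -> ch v u
| chT u v w : ch u v -> ch v w -> ch u w.

Lemma ch_ctx a b u v : ch a b -> ch (u ++ a ++ v) (u ++ b ++ v).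
Proof.
elim=> [i j k u0 v0 hij hjk|i j k u0 v0 hij hjk|w|w1 w2 _ IH|w1 w2 w3 _ IH1 _ IH2].
- by move: (@ch1 i j k (u ++ u0) (v0 ++ v) hij hjk); rewrite -!catA.
- by move: (@ch2 i j k (u ++ u0) (v0 ++ v) hij hjk); rewrite -!catA.
- exact: chR.
- exact: chS.
- exact: chT IH2.
Qed.

Lemma ch_cat a a' b b' : ch a a' -> ch b b' -> ch (a ++ b) (a' ++ b').
Proof.
move=> h1 h2; apply: (chT (v := a' ++ b)).
  by move: (@ch_ctx _ _ [::] b h1).
by move: (@ch_ctx _ _ a' [::] h2); rewrite !cats0.
Qed.

Lemma chL1 m x : x <= m -> ch [:: m; m; x] [:: m; x; m].
Proof. move=> h; exact: (@ch2 x m m [::] [::] h (leqnn m)). Qed.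

Lemma chL4 m z x : z <= x -> x <= m -> ch [:: m; z; x] [:: x; m; z].
Proof.
move=> h1 h2; apply: chS; apply: chT (@ch2 z x m [::] [::] h1 h2).
exact: (@ch1 z x m [::] [::] h1 h2).
Qed.

Lemma chL5 m x y : x <= y -> y <= m -> ch [:: m; y; x] [:: m; x; y].
Proof. move=> h1 h2; exact: (@ch2 x y m [::] [::] h1 h2). Qed.

Lemma chL3 m x y : x <= m -> y <= m -> ch ([:: m; x] ++ [:: m; y]) ([:: m; y] ++ [:: m; x]).
Proof.
wlog hxy : x y / x <= y.
  move=> W hx hy; case: (leqP x y) => h; first exact: W.
  by apply: chS; apply: W => //; apply: ltnW.
move=> hx hy /=.
have e1 : ch [:: m; x; m; y] [:: m; m; x; y].
  by move: (ch_cat (chS (chL1 hx)) (chR [:: y])).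
have e2 : ch [:: m; y; m; x] [:: m; m; x; y].
  exact: (ch_cat (chR [:: m]) (chT (@ch1 x y m [::] [::] hxy hy) (@ch2 x y m [::] [::] hxy hy))).
exact: chT e1 (chS e2).
Qed.

Definition pw (m y k : nat) : seq nat := flatten (nseq k [:: m; y]).
Definition rowp (m : nat) (K : nat -> nat -> nat) (L : seq nat) : seq nat :=
  flatten [seq pw m y (K m y) | y <- L].
Definition row m K := rowp m K (iota 0 m) ++ nseq (K m m) m.
Fixpoint nf m K := if m is m'.+1 then nf m' K ++ row m' K else [::].
Definition upd (K : nat -> nat -> nat) r y v : nat -> nat -> nat :=
  fun a b => if (a == r) && (b == y) then v else K a b.
Fixpoint ftop (K : nat -> nat -> nat) r l : option nat :=
  if l is l'.+1 then (if 0 < K r l' then Some l' else ftop K r l') else None.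
Fixpoint ins m K x : nat -> nat -> nat :=
  if m is m'.+1 then
    if x == m' then upd K m' m' (K m' m').+1
    else if 0 < K m' m' then upd (upd K m' m' (K m' m').-1) m' x (K m' x).+1
    else match ftop K m' m' with
         | Some y => if x < y then ins m' (upd (upd K m' y (K m' y).-1) m' x (K m' x).+1) y
                     else ins m' K x
         | None => ins m' K x end
  else K.

Lemma pwS m y k : pw m y k.+1 = [:: m; y] ++ pw m y k.
Proof. by []. Qed.

Lemma rowp_ext m K K' L : (forall y, y \in L -> K m y = K' m y) -> rowp m K L = rowp m K' L.
Proof.
move=> h; rewrite /rowp; congr flatten; by apply/eq_in_map => y /h ->.
Qed.

Lemma row_ext m K K' : (forall y, K m y = K' m y) -> row m K = row m K'.
Proof. by move=> h; rewrite /row (rowp_ext (K' := K')) ?h. Qed.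

Lemma nf_ext m K K' : (forall r y, r < m -> K r y = K' r y) -> nf m K = nf m K'.
Proof.
elim: m => [//|m IH] h /=; rewrite IH; last by move=> r y hr; apply: h; apply: ltnW.
by rewrite (row_ext (K' := K')) // => y; apply: h.
Qed.

Lemma ins_rows m K x r y : m <= r -> ins m K x r y = K r y.
Proof.
elim: m K x => [//|m IH] K x hr.
have hrm : (r == m) = false by apply/negbTE; rewrite neq_ltn hr orbT.
have hr' : m <= r by apply: ltnW.
rewrite [ins _ _ _]/=.
case: ifP => _; first by rewrite /upd hrm.
case: ifP => _; first by rewrite /upd hrm.
case: (ftop K m m) => [y'|]; last exact: IH.
case: ifP => _; last exact: IH.
by rewrite IH // /upd hrm.
Qed.
Lemma ftopS K r l y : ftop K r l = Some y ->
  [/\ y < l, 0 < K r y & forall z, y < z -> z < l -> K r z = 0].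
Proof.
elim: l => [//|l IH] /=; case: ifP => h.
  case=> <-; split=> // z h1 h2; lia.
move=> /IH [h1 h2 h3]; split => //; first lia.
move=> z hz hzl; case: (ltngtP z l) => hzl'; [exact: h3| lia |].
by subst; move: h; case: (K r l).
Qed.

Lemma ftopN K r l : ftop K r l = None -> forall z, z < l -> K r z = 0.
Proof.
elim: l => [//|l IH] /=; case: ifP => h // /IH h' z hz.
case: (ltngtP z l) => hzl; [exact: h'| lia |].
by subst; move: h; case: (K r l).
Qed.

Lemma pw_comm m z x k : z <= x -> x <= m -> ch (pw m z k ++ [:: x]) ([:: x] ++ pw m z k).
Proof.
move=> h1 h2; elim: k => [|k IH]; first exact: chR.
rewrite pwS -catA; apply: chT (ch_cat (@chR [:: m; z]) IH) _.
rewrite !catA; apply: ch_cat; last exact: chR.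
exact: chL4.
Qed.

Lemma rowp_comm m K L x : (forall y, y \in L -> 0 < K m y -> y <= x) -> x <= m ->
  ch (rowp m K L ++ [:: x]) ([:: x] ++ rowp m K L).
Proof.
elim: L => [|y L IH] h hx; first exact: chR.
have IH' : ch (rowp m K L ++ [:: x]) ([:: x] ++ rowp m K L).
  by apply: IH hx => z hz; apply: h; rewrite inE hz orbT.
rewrite /rowp -cat1s /= -/(rowp m K L) -catA.
apply: chT (ch_cat (chR (pw m y (K m y))) IH') _.
rewrite (_ : x :: pw m y (K m y) ++ rowp m K L = ([:: x] ++ pw m y (K m y)) ++ rowp m K L) //.
rewrite catA; apply: ch_cat; last exact: chR.
case hk: (K m y) => [|k]; first exact: chR.
apply: pw_comm hx; apply: h; rewrite ?inE ?eqxx ?hk //.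
Qed.

Lemma pw_comm2 m x y k : x <= m -> y <= m -> ch ([:: m; x] ++ pw m y k) (pw m y k ++ [:: m; x]).
Proof.
move=> hx hy; elim: k => [|k IH]; first by rewrite cats0; exact: chR.
rewrite pwS catA; apply: chT (ch_cat (chL3 hx hy) (@chR _)) _.
rewrite -!catA; exact: ch_cat (@chR _) IH.
Qed.

Lemma rowp_cons m K y L : rowp m K (y :: L) = pw m y (K m y) ++ rowp m K L.
Proof. by []. Qed.

Lemma rowp_comm2 m K L x : all (fun y => y <= m) L -> x <= m ->
  ch ([:: m; x] ++ rowp m K L) (rowp m K L ++ [:: m; x]).
Proof.
elim: L => [|y L IH] hL hx; first exact: chR.
have /andP [hy {}hL] : (y <= m) && all (fun y => y <= m) L := hL.
rewrite rowp_cons catA; apply: chT (ch_cat (pw_comm2 (K m y) hx hy) (chR (rowp m K L))) _.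
rewrite -!catA; exact: ch_cat (chR _) (IH hL hx).
Qed.

Lemma rowp_PX m K L x : uniq L -> x \in L -> all (fun y => y <= m) L -> x <= m ->
  ch (rowp m (upd K m x (K m x).+1) L) (rowp m K L ++ [:: m; x]).
Proof.
elim: L => [//|y L IH] hu hx hL hxm.
have /andP [hyL {}hu] : (y \notin L) && uniq L := hu.
have /andP [hy {}hL] : (y <= m) && all (fun y => y <= m) L := hL.
rewrite !rowp_cons.
case: (eqVneq y x) => [eyx|nyx].
  subst y; rewrite {1}/upd !eqxx andTb pwS -catA.
  rewrite (@rowp_ext m (upd K m x (K m x).+1) K L); last first.
    by move=> z hz; rewrite /upd eqxx /=; case: eqP => // ez; subst z; rewrite hz in hyL.
  have := @rowp_comm2 m K (x :: L) x; rewrite rowp_cons /= hy hL => H.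
  by apply: H.
rewrite {1}/upd eqxx andTb (negbTE nyx) -catA.
apply: ch_cat (chR _) _; apply: IH => //.
by move: hx; rewrite inE eq_sym (negbTE nyx).
Qed.

Lemma nseq_cat1 (T : Type) k (a : T) : nseq k.+1 a = nseq k a ++ [:: a].
Proof. by elim: k => //= k ->. Qed.

Lemma chA m x d : x <= m -> ch (nseq d.+1 m ++ [:: x]) ([:: m; x] ++ nseq d m).
Proof.
move=> hx; elim: d => [|d IH]; first exact: chR.
rewrite [nseq d.+2 m]/= -cat1s -catA.
apply: chT (ch_cat (@chR [:: m]) IH) _.
rewrite catA (_ : [:: m; x] ++ nseq d.+1 m = [:: m; x; m] ++ nseq d m) //.
apply: ch_cat; [exact: chL1 | exact: chR].
Qed.

Lemma neq_lt r m : r < m -> (r == m) = false.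
Proof. by move=> h; apply/negbTE; rewrite neq_ltn h. Qed.

Lemma ins_ch m K x : x < m -> ch (nf m K ++ [:: x]) (nf m (ins m K x)).
Proof.
elim: m K x => [//|m IH] K x hx.
have hiota : forall y, y \in iota 0 m -> y < m by move=> y; rewrite mem_iota.
have hall : all (fun y => y <= m) (iota 0 m) by apply/allP => y /hiota /ltnW.
have huniq : uniq (iota 0 m) by apply: iota_uniq.
have hnf : forall K', nf m.+1 K' = nf m K' ++ row m K' by [].
rewrite [ins _ _ _]/= hnf.
case: eqP => [exm|/eqP nxm].
  subst x; set K1 := upd K m m (K m m).+1.
  rewrite hnf (@nf_ext m K1 K); last by move=> r y hr; rewrite /K1 /upd neq_lt.
  rewrite /row (@rowp_ext m K1 K); last by move=> y /hiota hy; rewrite /K1 /upd eqxx neq_lt.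
  have -> : K1 m m = (K m m).+1 by rewrite /K1 /upd !eqxx.
  rewrite nseq_cat1 -!catA; exact: chR.
have hxm : x < m by rewrite ltnS leq_eqVlt (negbTE nxm) in hx.
have hxiota : x \in iota 0 m by rewrite mem_iota.
case: ifP => hd.
  set K1 := upd (upd K m m (K m m).-1) m x (K m x).+1.
  have e1 : nf m K1 = nf m K by apply: nf_ext => r y hr; rewrite /K1 /upd neq_lt.
  have e2 : rowp m K1 (iota 0 m) = rowp m (upd K m x (K m x).+1) (iota 0 m).
    apply: rowp_ext => y /hiota hy; rewrite /K1 /upd eqxx /= (neq_lt hy).
    by case: (y == x).
  have nmx : (m == x) = false by rewrite eq_sym (negbTE nxm).
  have e3 : K1 m m = (K m m).-1 by rewrite /K1 /upd eqxx nmx.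
  rewrite hnf /row e1 e2 e3.
  have [d ed] : exists d, K m m = d.+1 by exists (K m m).-1; rewrite prednK.
  rewrite ed /= -!catA; apply: ch_cat (chR _) _.
  apply: chT (ch_cat (chR (rowp m K (iota 0 m))) (chA d (ltnW hxm))) _.
  rewrite catA; apply: ch_cat (chS (rowp_PX K huniq hxiota hall (ltnW hxm))) (chR _).
have hz : K m m = 0 by move: hd; case: (K m m).
have pass : (forall z, z \in iota 0 m -> 0 < K m z -> z <= x) ->
    ch ((nf m K ++ row m K) ++ [:: x]) (nf m.+1 (ins m K x)).
  move=> hc; rewrite hnf (@row_ext m (ins m K x) K); last by move=> z; apply: ins_rows.
  rewrite /row hz /= !cats0 -catA.
  apply: chT (ch_cat (chR (nf m K)) (rowp_comm hc (ltnW hxm))) _.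
  rewrite catA; apply: ch_cat (IH _ _ hxm) (chR _).
case ft: (ftop K m m) => [y|]; last first.
  apply: pass => z /hiota hzm; rewrite (ftopN ft hzm) //.
have [hym hKy hz'] := ftopS ft.
case: ifP => hxy; last first.
  apply: pass => z /hiota hzm hKz; case: (leqP z y) => hzy.
    by apply: leq_trans hzy _; rewrite leqNgt hxy.
  by rewrite (hz' z hzy hzm) in hKz.
set K2 := upd K m y (K m y).-1.
set K1 := upd K2 m x (K m x).+1.
have hyx : (y == x) = false by apply/negbTE; rewrite neq_ltn hxy orbT.
have hyi : y \in iota 0 m by rewrite mem_iota.
have e1 : nf m K1 = nf m K by apply: nf_ext => r z hr; rewrite /K1 /K2 /upd (neq_lt hr).
have nmx' : (m == x) = false by rewrite eq_sym neq_lt.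
have nmy : (m == y) = false by rewrite eq_sym neq_lt.
have eK1mm : K1 m m = 0 by rewrite /K1 /K2 /upd eqxx nmx' nmy.
have eK2x : K2 m x = K m x by rewrite /K2 /upd eqxx /= eq_sym hyx.
rewrite hnf (@row_ext m (ins m K1 y) K1); last by move=> z; apply: ins_rows.
rewrite /row hz eK1mm /= !cats0.
have s1 : ch (rowp m K (iota 0 m)) (rowp m K2 (iota 0 m) ++ [:: m; y]).
  rewrite -(@rowp_ext m (upd K2 m y (K2 m y).+1) K); first exact: rowp_PX huniq hyi hall (ltnW hym).
  move=> z _; case: (eqVneq z y) => [->|nzy]; rewrite /K2 /upd ?eqxx /= ?prednK //.
  by rewrite (negbTE nzy).
have s2 : ch (rowp m K2 (iota 0 m) ++ [:: m; x]) (rowp m K1 (iota 0 m)).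
  apply: chS; rewrite -(@rowp_ext m (upd K2 m x (K2 m x).+1) K1).
    exact: rowp_PX huniq hxiota hall (ltnW hxm).
  by move=> z _; rewrite eK2x.
have s3 : ch (rowp m K1 (iota 0 m) ++ [:: y]) ([:: y] ++ rowp m K1 (iota 0 m)).
  apply: rowp_comm (ltnW hym) => z /hiota hzm.
  move=> hK; case: (eqVneq z x) => [->|nzx]; first exact: ltnW.
  case: (eqVneq z y) => [->|nzy] //.
  move: hK; rewrite /K1 /K2 /upd eqxx /= (negbTE nzx) (negbTE nzy) => hKz.
  case: (leqP z y) => hzy //.
  by rewrite (hz' z hzy hzm) in hKz.
have s5 := chL5 (ltnW hxy) (ltnW hym).
apply: (@chT _ (nf m K ++ rowp m K2 (iota 0 m) ++ [:: m; y; x])).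
  rewrite -catA; apply: ch_cat (chR _) _.
  by move: (ch_cat s1 (chR [:: x])); rewrite -catA.
apply: (@chT _ (nf m K ++ (rowp m K2 (iota 0 m) ++ [:: m; x]) ++ [:: y])).
  apply: ch_cat (chR _) _; rewrite -catA; exact: ch_cat (chR _) s5.
apply: (@chT _ (nf m K ++ [:: y] ++ rowp m K1 (iota 0 m))).
  apply: ch_cat (chR _) _; exact: chT (ch_cat s2 (chR _)) s3.
rewrite catA -e1; exact: ch_cat (IH _ _ hym) (chR _).
Qed.

Definition K0 : nat -> nat -> nat := fun _ _ => 0.
Definition Kof n (w : seq nat) := foldl (ins n) K0 w.

Lemma nf_K0 m : nf m K0 = [::].
Proof.
elim: m => [//|m IH]; rewrite /= IH /row /=.
rewrite /rowp; elim: (iota 0 m) => [//|y L IHL] /=. exact: IHL.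
Qed.

Lemma ch_nf n w : all (fun x => x < n) w -> ch w (nf n (Kof n w)).
Proof.
elim/last_ind: w => [|w x IH]; first by move=> _; rewrite /Kof /= nf_K0; exact: chR.
rewrite all_rcons => /andP [hx hw]; rewrite /Kof foldl_rcons -/(Kof n w) -cats1.
exact: chT (ch_cat (IH hw) (chR [:: x])) (@ins_ch n (Kof n w) x hx).
Qed.

Lemma all_pw (a : pred nat) m y k : a m -> a y -> all a (pw m y k).
Proof. by move=> h1 h2; elim: k => [//|k IH]; rewrite pwS /= h1 h2. Qed.

Lemma all_rowp (a : pred nat) m K L : a m -> (forall y, y \in L -> a y) -> all a (rowp m K L).
Proof.
move=> hm; elim: L => [//|y L IH] hL; rewrite rowp_cons all_cat all_pw ?IH //.
  by move=> z hz; apply: hL; rewrite inE hz orbT.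
by apply: hL; rewrite inE eqxx.
Qed.

Lemma all_row (a : pred nat) r K : (forall y, y <= r -> a y) -> all a (row r K).
Proof.
move=> h; rewrite /row all_cat all_rowp ?h //=.
  by rewrite all_nseq h ?orbT.
by move=> y; rewrite mem_iota => /andP [_ hy]; apply: h; apply: ltnW.
Qed.

Lemma all_nf (a : pred nat) m K : (forall y, y < m -> a y) -> all a (nf m K).
Proof.
elim: m => [//|m IH] h /=; rewrite all_cat IH ?all_row // => y hy; apply: h; lia.
Qed.

Definition cle t (s : seq nat) := count (fun x => x <= t) s.

Lemma cle_split t s : 0 < t -> cle t s = cle t.-1 s + count (pred1 t) s.
Proof.
move=> ht; rewrite /cle; elim: s => [//|x s IH] /=; rewrite IH.
case: (ltngtP x t) => hxt /=;
  [rewrite (_ : (x <= t.-1) = true) | rewrite (_ : (x <= t.-1) = false)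
  | rewrite (_ : (x <= t.-1) = false)]; lia.
Qed.

Lemma cle0 s : cle 0 s = count (pred1 0) s.
Proof. by apply: eq_count => x; rewrite leqn0. Qed.

Lemma count_pw r y k t : r != t -> count (pred1 t) (pw r y k) = (y == t) * k.
Proof.
move=> h; elim: k => [|k IH]; first by rewrite muln0.
by rewrite pwS count_cat IH /= (negbTE h) mulnS add0n addn0.
Qed.

Lemma count_rowp r K L t : r != t -> uniq L ->
  count (pred1 t) (rowp r K L) = if t \in L then K r t else 0.
Proof.
move=> h; elim: L => [//|y L IH] /= /andP [hyL hu].
rewrite rowp_cons count_cat count_pw // IH // inE.
case: (eqVneq y t) => [eyt|nyt] /=.
  by subst y; rewrite (negbTE hyL) mul1n addn0.
by rewrite mul0n.
Qed.

Lemma count_row r K t : t < r -> count (pred1 t) (row r K) = K r t.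
Proof.
move=> htr; have hrt : r != t by rewrite neq_ltn htr orbT.
rewrite /row count_cat count_rowp ?iota_uniq // mem_iota htr /= count_nseq /=.
by rewrite (negbTE hrt) mul0n addn0.
Qed.

Lemma nf_inj n K K' :
  (forall t j, t <= j -> j < n -> cle t (nf j.+1 K) = cle t (nf j.+1 K')) ->
  nf n K = nf n K'.
Proof.
move=> H.
have Hsz : forall r, r <= n -> size (nf r K) = size (nf r K').
  case=> [//|r] hr.
  have e : forall K1, cle r (nf r.+1 K1) = size (nf r.+1 K1).
    by move=> K1; apply/eqP; rewrite /cle -all_count all_nf // => y; rewrite ltnS.
  by rewrite -!e H.
have Hrow : forall r, r < n -> row r K = row r K'.
  move=> r hr.
  have Hc : forall t, t < r -> cle t (row r K) = cle t (row r K').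
    move=> t htr; case: r hr htr => [//|r] hr htr.
    have h1 := H t r.+1 (ltnW htr) hr.
    have h2 := H t r htr (ltnW hr).
    move: h1; rewrite (_ : nf r.+2 K = nf r.+1 K ++ row r.+1 K) //.
    rewrite (_ : nf r.+2 K' = nf r.+1 K' ++ row r.+1 K') //.
    rewrite /cle in h2 *; rewrite (count_cat _ (nf r.+1 K)) (count_cat _ (nf r.+1 K')) h2.
    move=> /eqP; rewrite eqn_add2l => /eqP.
    by [].
  have Hk : forall t, t < r -> K r t = K' r t.
    move=> t htr; rewrite -(count_row K htr) -(count_row K' htr).
    case: t htr => [|t] htr; first by rewrite -!cle0; exact: Hc.
    have := cle_split (row r K) (ltn0Sn t); have := cle_split (row r K') (ltn0Sn t).
    rewrite /= (Hc t.+1 htr) (Hc t (ltnW htr)) => -> /eqP; rewrite eqn_add2l => /eqP.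
    by [].
  have Hp : rowp r K (iota 0 r) = rowp r K' (iota 0 r).
    by apply: rowp_ext => y; rewrite mem_iota => /andP [_ hy]; apply: Hk.
  have Hs : size (row r K) = size (row r K').
    have := Hsz r.+1 hr; have := Hsz r (ltnW hr).
    rewrite (_ : nf r.+1 K = nf r K ++ row r K) // (_ : nf r.+1 K' = nf r K' ++ row r K') //.
    by rewrite (size_cat (nf r K)) (size_cat (nf r K')) => -> /eqP; rewrite eqn_add2l => /eqP.
  move: Hs; rewrite /row Hp (size_cat (rowp _ _ _)) (size_cat (rowp _ _ _)) !size_nseq => /eqP; rewrite eqn_add2l => /eqP ->.
  by [].
suff : forall m, m <= n -> nf m K = nf m K' by apply.
elim=> [//|m IH] hm /=; rewrite IH ?Hrow //; exact: ltnW.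
Qed.

Definition wt (t j x : nat) : R := if x <= t then R1 else if x <= j then R0 else Ropp R1.
Fixpoint Fw t j (u : seq nat) : R := if u is x :: u' then Rplus (wt t j x) (Fw t j u') else R0.
Fixpoint Pw t j (u : seq nat) : R :=
  if u is x :: u' then Rmax R0 (Rplus (wt t j x) (Pw t j u')) else R0.

Section Reals.
Local Open Scope R_scope.

Ltac rmax := unfold Rmax in *; repeat (destruct Rle_dec); try lra.

Lemma wt_cases t j x : wt t j x = 1 \/ wt t j x = 0 \/ wt t j x = -1.
Proof. rewrite /wt; case: ifP => _; [left|case: ifP => _]; auto. Qed.

Lemma wt_le1 t j x : wt t j x <= 1.
Proof. case: (wt_cases t j x) => [->|[->| ->]]; lra. Qed.

Lemma wt_mono t j x y : (x <= y)%N -> wt t j y <= wt t j x.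
Proof.
move=> h; rewrite /wt.
case: (leqP y t) => hy; first by rewrite (leq_trans h hy); lra.
case: (leqP x t) => hx; first by case: ifP => _; lra.
case: (leqP y j) => hy'; first by rewrite (leq_trans h hy'); lra.
by case: ifP => _; lra.
Qed.

Lemma Fw_cat t j u v : Fw t j (u ++ v) = Fw t j u + Fw t j v.
Proof. elim: u => [|x u IH] /=; [lra | rewrite IH; lra]. Qed.

Lemma Pw_ge0 t j u : 0 <= Pw t j u.
Proof. case: u => [|x u] /=; [lra | rmax]. Qed.

Lemma Pw_cat t j u v : Pw t j (u ++ v) = Rmax (Pw t j u) (Fw t j u + Pw t j v).
Proof.
elim: u => [|x u IH] /=; first by have := Pw_ge0 t j v; rmax.
rewrite IH; have := Pw_ge0 t j u; have := Pw_ge0 t j v; rmax.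
Qed.

Definition P3 a b c := Rmax 0 (a + Rmax 0 (b + Rmax 0 (c + 0))).

Lemma P3_rel (X Y Z : R) : (X = 1 \/ X = 0 \/ X = -1) -> (Y = 1 \/ Y = 0 \/ Y = -1) ->
  (Z = 1 \/ Z = 0 \/ Z = -1) -> Z <= Y -> Y <= X ->
  P3 Y Z X = P3 Z Y X /\ P3 Z Y X = P3 Z X Y.
Proof.
rewrite /P3 => hX hY hZ.
case: hX => [->|[->| ->]]; case: hY => [->|[->| ->]]; case: hZ => [->|[->| ->]];
  move=> h1 h2; try lra; split; rmax.
Qed.

Lemma ch_inv t j a b : ch a b -> Fw t j a = Fw t j b /\ Pw t j a = Pw t j b.
Proof.
have base : forall u v s s', Fw t j s = Fw t j s' -> Pw t j s = Pw t j s' ->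
    Fw t j (u ++ s ++ v) = Fw t j (u ++ s' ++ v) /\ Pw t j (u ++ s ++ v) = Pw t j (u ++ s' ++ v).
  move=> u v s s' h1 h2; rewrite !Fw_cat !Pw_cat ?Fw_cat h1 h2; split => //.
elim=> [i j0 k u v hij hjk|i j0 k u v hij hjk|w|w1 w2 _ [IH1 IH2]|w1 w2 w3 _ [IH1 IH2] _ [IH3 IH4]].
- apply: base; first by rewrite /=; lra.
  have hi := wt_cases t j i; have hj := wt_cases t j j0; have hk := wt_cases t j k.
  have := P3_rel hi hj hk (wt_mono t j hjk) (wt_mono t j hij).
  by rewrite /P3 /= => [[-> _]].
- apply: base; first by rewrite /=; lra.
  have hi := wt_cases t j i; have hj := wt_cases t j j0; have hk := wt_cases t j k.
  have := P3_rel hi hj hk (wt_mono t j hjk) (wt_mono t j hij).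
  by rewrite /P3 /= => [[_ ->]].
- by [].
- by [].
- by rewrite IH1 IH2.
Qed.

End Reals.

Lemma ch_size a b : ch a b -> size a = size b.
Proof.
elim=> //= [i j k u v _ _|i j k u v _ _|w1 w2 w3 _ -> _ ->] //; by rewrite !size_cat.
Qed.

Section Reals2.
Local Open Scope R_scope.
Ltac rmax := unfold Rmax in *; repeat (destruct Rle_dec); try lra.

Lemma Pw_nonneg t j u : all (fun x => x <= j)%N u ->
  Pw t j u = Fw t j u /\ Fw t j u = INR (cle t u).
Proof.
elim: u => [|x u IH] /=; first by rewrite /cle /=.
move=> /andP [hx hu]; have [e1 e2] := IH hu.
have hc := pos_INR (cle t u).
rewrite /cle /= -/(cle t u) e1 e2 /wt hx plus_INR.
by case: ifP => hxt /=; split; rmax.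
Qed.

Definition Np t j u := Pw t j u = 0 /\ Fw t j u <= 0.

Lemma Np_cat t j u v : Np t j u -> Np t j v -> Np t j (u ++ v).
Proof.
move=> [h1 h2] [h3 h4]; rewrite /Np Pw_cat Fw_cat h1 h3; split; [rmax | lra].
Qed.

Lemma Np_nil t j : Np t j [::].
Proof. by rewrite /Np /=; split; lra. Qed.

Lemma wt_big t j r : (t <= j)%N -> (j < r)%N -> wt t j r = -1.
Proof.
move=> h1 h2; rewrite /wt.
have -> : (r <= t)%N = false by apply/negbTE; rewrite -ltnNge; apply: leq_ltn_trans h1 h2.
by have -> : (r <= j)%N = false by apply/negbTE; rewrite -ltnNge.
Qed.

Lemma Np_pw t j r y k : (t <= j)%N -> (j < r)%N -> Np t j (pw r y k).
Proof.
move=> h1 h2; elim: k => [|k IH]; first exact: Np_nil.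
rewrite pwS; apply: Np_cat IH; rewrite /Np /= (wt_big h1 h2).
have := wt_le1 t j y; split; rmax.
Qed.

Lemma Np_rowp t j r K L : (t <= j)%N -> (j < r)%N -> Np t j (rowp r K L).
Proof.
move=> h1 h2; elim: L => [|y L IH]; first exact: Np_nil.
rewrite rowp_cons; exact: Np_cat (Np_pw _ _ h1 h2) IH.
Qed.

Lemma Np_row t j r K : (t <= j)%N -> (j < r)%N -> Np t j (row r K).
Proof.
move=> h1 h2; rewrite /row; apply: Np_cat; first exact: Np_rowp.
elim: (K r r) => [|k IH]; first exact: Np_nil.
rewrite (_ : nseq k.+1 r = [:: r] ++ nseq k r) //; apply: Np_cat IH.
rewrite /Np /= (wt_big h1 h2); split; rmax.
Qed.

Lemma Np_rest t j K m : (t <= j)%N -> (j < m)%N ->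
  exists rest, nf m K = nf j.+1 K ++ rest /\ Np t j rest.
Proof.
move=> htj; elim: m => [//|m IH] hm.
case: (eqVneq m j) => [->|nmj].
  by exists [::]; rewrite cats0; split => //; exact: Np_nil.
have hjm : (j < m)%N by rewrite ltnS leq_eqVlt eq_sym (negbTE nmj) in hm.
have [rest [e hN]] := IH hjm.
exists (rest ++ row m K); split; first by rewrite /= e catA.
apply: Np_cat hN _; exact: Np_row.
Qed.

Lemma Pw_nf t j n K : (t <= j)%N -> (j < n)%N ->
  Pw t j (nf n K) = INR (cle t (nf j.+1 K)).
Proof.
move=> h1 h2; have [rest [-> [hP hF]]] := Np_rest K h1 h2.
have [e1 e2] := Pw_nonneg t (u := nf j.+1 K) (all_nf K (fun y (hy : (y < j.+1)%N) => hy)).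
rewrite Pw_cat hP e1 e2; rmax.
Qed.

End Reals2.

Lemma taddA : associative tadd.
Proof. by case=> [a|] [b|] [c|] //=; rewrite Rmax_assoc. Qed.
Lemma taddC : commutative tadd.
Proof. by case=> [a|] [b|] //=; rewrite Rmax_comm. Qed.
Lemma tadd0l : left_id None tadd.
Proof. by case. Qed.
HB.instance Definition _ := Monoid.isComLaw.Build trop None tadd taddA taddC tadd0l.

Definition pairs n := flatten [seq [seq (t, j) | t <- iota 0 j.+1] | j <- iota 0 n].

Lemma size_pairs n : (size (pairs n)).*2 = n * n.+1.
Proof.
elim: n => [//|n IH].
rewrite /pairs -addn1 iotaD map_cat flatten_cat -/(pairs n) size_cat /= cats0 size_map size_iota.
rewrite doubleD IH add0n; lia.
Qed.

Lemma pairs_mem n t j : (t <= j)%N -> (j < n)%N -> (t, j) \in pairs n.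
Proof.
move=> h1 h2; apply/flattenP; exists [seq (t0, j) | t0 <- iota 0 j.+1].
  by apply/mapP; exists j => //; rewrite mem_iota.
by apply/mapP; exists t => //; rewrite mem_iota.
Qed.

Definition blk n b := nth (0%N, 0%N) (pairs n) b.

Definition Gw t j (w : seq nat) : trop := if w is [::] then None else Some (Pw t j w).

Definition E n (w : seq nat) (b1 : nat) (a1 : bool) (b2 : nat) (a2 : bool) : trop :=
  if b1 == b2 then
    let tj := blk n b1 in
    match a1, a2 with
    | false, false => Some (Fw tj.1 tj.2 w)
    | true, true => Some R0
    | false, true => Gw tj.1 tj.2 w
    | true, false => None
    end
  else None.

Definition entry n w (r c : nat) := E n w r./2 (odd r) c./2 (odd c).

Definition rhoN n (w : seq nat) : 'M[trop]_(n * n.+1) := \matrix_(r, c) entry n w r c.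

Lemma addR0l x : Rplus R0 x = x.
Proof. by rewrite Rplus_0_l. Qed.
Lemma addR0r x : Rplus x R0 = x.
Proof. by rewrite Rplus_0_r. Qed.

Lemma taddxN x : tadd x None = x.
Proof. by case: x. Qed.

Lemma tmulN x : tmul x None = None.
Proof. by case: x. Qed.

Lemma Gw_cat t j u v :
  Gw t j (u ++ v) = tadd (tmul (Some (Fw t j u)) (Gw t j v)) (tmul (Gw t j u) (Some R0)).
Proof.
case: u => [|x u]; case: v => [|y v] //=.
- by rewrite addR0l.
- by rewrite cats0 addR0r.
- rewrite addR0r; have := Pw_cat t j (x :: u) (y :: v); rewrite /= => ->.
  by rewrite Rmax_comm.
Qed.

Arguments tmul : simpl never.
Arguments tadd : simpl never.

Lemma entry_mul n u v (r c : 'I_(n * n.+1)) :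
  \big[tadd/None]_(k < n * n.+1) tmul (entry n u r k) (entry n v k c) = entry n (u ++ v) r c.
Proof.
set N := n * n.+1; set M := size (pairs n).
have eN : N = M.*2 by rewrite size_pairs.
case: (eqVneq (r./2) (c./2)) => hrc; last first.
  rewrite {3}/entry /E (negbTE hrc) big1 // => k _.
  rewrite /entry /E; case: (eqVneq (r./2) (k./2)) => hk; last by [].
  by rewrite -hk (negbTE hrc) tmulN.
set b := r./2.
have hb : (b < M)%N by rewrite /b ltn_half_double -eN.
have hk0 : (b.*2 < N)%N by rewrite eN ltn_double.
have hk1 : (b.*2.+1 < N)%N by rewrite eN -doubleS leq_double.
pose k0 := Ordinal hk0; pose k1 := Ordinal hk1.
have nk : k1 != k0 by rewrite -val_eqE /= neq_ltn ltnSn orbT.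
rewrite (bigD1 k0) // (bigD1 k1) //= big1; last first.
  move=> k /andP [hk1' hk0']; rewrite /entry /E.
  case: (eqVneq b (k./2)) => hk; last by [].
  exfalso.
  have [e|e] : (k : nat) = b.*2 \/ (k : nat) = b.*2.+1.
    rewrite hk; case: (odd k) (odd_double_half k) => /= e; [right|left].
      by rewrite -{1}e add1n.
    by rewrite -{1}e add0n.
    by move: hk0' hk1'; rewrite -!val_eqE /= e eqxx /= ?andbF.
  by move: hk0' hk1'; rewrite -!val_eqE /= e eqxx /= ?andbF.
rewrite /entry /E /= doubleK uphalf_double odd_double /=.
rewrite -/b -hrc eqxx.
case: (odd r); case: (odd c) => /=; rewrite ?tmulN ?taddxN.
- by rewrite /tmul addR0l.
- by [].
- by rewrite Gw_cat.
- by rewrite Fw_cat.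
Qed.

Definition pI n' (x : nat) : 'I_n'.+1 := inord (minn x n').

Lemma pI_val n' (i : 'I_n'.+1) : pI n' i = i.
Proof.
rewrite /pI (_ : minn i n' = i) ?inord_val //.
by apply/minn_idPl; rewrite -ltnS.
Qed.

Lemma pI_mono n' x y : (x <= y)%N -> (pI n' x <= pI n' y)%N.
Proof.
move=> h; rewrite /pI !inordK; try by rewrite ltnS geq_minr.
lia.
Qed.

Lemma ch_cong n' a b : ch a b -> chinese_cong (map (pI n') a) (map (pI n') b).
Proof.
elim=> [i j k u v hij hjk|i j k u v hij hjk|w|w1 w2 _ IH|w1 w2 w3 _ IH1 _ IH2].
- rewrite !map_cat /=; apply: chc_rel1; exact: pI_mono.
- rewrite !map_cat /=; apply: chc_rel2; exact: pI_mono.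
- exact: chc_refl.
- exact: chc_sym.
- exact: chc_trans IH2.
Qed.

Lemma cong_ch n (u v : seq 'I_n) : chinese_cong u v -> ch (map val u) (map val v).
Proof.
elim=> [i j k u0 v0 hij hjk|i j k u0 v0 hij hjk|w|w1 w2 _ IH|w1 w2 w3 _ IH1 _ IH2].
- rewrite !map_cat /=; exact: ch1.
- rewrite !map_cat /=; exact: ch2.
- exact: chR.
- exact: chS.
- exact: chT IH2.
Qed.

Lemma entry_ch n U V r c : ch U V -> entry n U r c = entry n V r c.
Proof.
move=> h; rewrite /entry /E.
have hs := ch_size h.
have hG : forall t j, Gw t j U = Gw t j V.
  move=> t j; have [_ hP] := ch_inv t j h.
  by case: U V hs h hP => [|x U] [|y V] //= _ _ ->.
case: ifP => // _; case: (odd r); case: (odd c) => //.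
by have [-> _] := ch_inv (blk n r./2).1 (blk n r./2).2 h.
Qed.

Theorem theoremI (n : nat) (hn : (0 < n)%N) :
  exists rho : seq 'I_n -> 'M[trop]_(n * n.+1),
    [/\ chinese_trop_rep rho,
        chinese_faithful rho &
        forall u, upper_tri (rho u) /\ block_diag2 (rho u)].
Proof.
case: n hn => [//|n'] _.
exists (fun u => rhoN n'.+1 (map val u)); split.
- split.
  + apply/matrixP => r c; rewrite !mxE /entry /E.
    have key : (r == c) = (r./2 == c./2) && (odd r == odd c).
      rewrite -val_eqE /=; apply/eqP/andP => [-> //|[/eqP e1 /eqP e2]].
      by rewrite -(odd_double_half r) -(odd_double_half c) e1 e2.
    rewrite key; case: eqP => //= _; case: (odd r); case: (odd c) => //.
  + move=> u v; apply/matrixP => r c; rewrite /tmxmul !mxE map_cat -entry_mul.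
    by apply: eq_bigr => k _; rewrite !mxE.
  + move=> u v /cong_ch h; apply/matrixP => r c; rewrite !mxE; exact: entry_ch.
- move=> u v heq.
  have hU : forall w : seq 'I_n'.+1, all (fun x => x < n'.+1) (map val w).
    by move=> w; apply/allP => x /mapP [i _ ->]; exact: ltn_ord.
  have hG : forall t j, t <= j -> j < n'.+1 -> Gw t j (map val u) = Gw t j (map val v).
    move=> t j htj hj.
    have hmem := pairs_mem htj hj.
    set b := index (t, j) (pairs n'.+1).
    have hb : b < size (pairs n'.+1) by rewrite index_mem.
    have eb : blk n'.+1 b = (t, j) by rewrite /blk nth_index.
    have hN : b.*2.+1 < n'.+1 * n'.+2 by rewrite -size_pairs -doubleS leq_double.
    have hN0 : b.*2 < n'.+1 * n'.+2 by apply: ltnW.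
    have := congr1 (fun M : 'M[trop]_(n'.+1 * n'.+2) => M (Ordinal hN0) (Ordinal hN)) heq.
    by rewrite !mxE /entry /E /= doubleK uphalf_double odd_double eqxx /= eb.
  have hG0 := hG 0 0 (leqnn 0) (ltn0Sn n').
  case eU: (map val u) hG0 => [|x U']; case eV: (map val v) => [|y V'] //= _.
    have /size0nil -> : size u = 0 by rewrite -(size_map val) eU.
    have /size0nil -> : size v = 0 by rewrite -(size_map val) eV.
    exact: chc_refl.
  have KU := ch_nf (hU u); have KV := ch_nf (hU v).
  have hnf : nf n'.+1 (Kof n'.+1 (map val u)) = nf n'.+1 (Kof n'.+1 (map val v)).
    apply: nf_inj => t j htj hj; apply: INR_eq; rewrite -(@Pw_nf t j n'.+1) // -(@Pw_nf t j n'.+1) //.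
    have [_ e1] := ch_inv t j KU; have [_ e2] := ch_inv t j KV.
    rewrite -e1 -e2; have := hG t j htj hj; rewrite eU eV /=; by case.
  have hUV : ch (map val u) (map val v) by apply: chT KU _; rewrite hnf; exact: chS KV.
  have := ch_cong n' hUV; rewrite -!map_comp.
  have e : pI n' \o val =1 id by move=> i; exact: pI_val.
  by rewrite !(eq_map e) !map_id.
- move=> u; split => i j h; rewrite mxE /entry /E.
    case: eqP => // e.
    case: (odd i) (odd_double_half i) => ei; case: (odd j) (odd_double_half j) => ej //;
      exfalso; rewrite -!addnn e in ei ej; move: ei ej h => /=; lia.
  by rewrite (negbTE h).
Qed.
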